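(* The empty space is the only finitely generated object of the category $\mathsf{Top}_0$ of T$_0$-spaces and continuous maps.
   Context: An object $X$ of a category $\mathcal{C}$ is finitely generated if for every directed diagram $(Z_i)_{i\in I}$ in $\mathcal{C}$ (indexed by a directed poset, i.e. every finite subset has an upper bound) all of whose connecting morphisms $z_{i,j}$ are monomorphisms, with colimit cocone $c_i:Z_i\to Z$ in $\mathcal{C}$, every morphism $f:X\to Z$ factorizes as $f=c_i\cdot g$ for some $i$ and $g:X\to Z_i$, and if also $f=c_i\cdot g'$ then $z_{i,j}\cdot g=z_{i,j}\cdot g'$ for some connecting morphism $z_{i,j}$. *)

(* Defs.v *)
(* topological spaces are MathComp-Analysis
   [topologicalType]s, T0 = [kolmogorov_space], morphisms of Top_0 are
   continuous functions (equality of morphisms = equality of functions). *)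
From HB Require Import structures.
From mathcomp Require Import all_boot all_order.
From mathcomp Require Import boolp classical_sets topology separation_axioms.
Set Implicit Arguments. Unset Strict Implicit. Unset Printing Implicit Defensive.
Local Open Scope classical_set_scope.

Definition Top0_mono (A B : topologicalType) (f : A -> B) : Prop :=
  forall (W : topologicalType), kolmogorov_space W ->
  forall g h : W -> A, continuous g -> continuous h ->
  f \o g = f \o h -> g = h.

(* (I, le) is a directed poset: a partial order in which every finite
   subset (given as a list, including the empty one) has an upper bound. *)
Definition directed_poset (I : Type) (le : I -> I -> Prop) : Prop :=
  [/\ (forall i, le i i),
      (forall i j k, le i j -> le j k -> le i k),
      (forall i j, le i j -> le j i -> i = j) &
      (forall s : seq I, exists j, foldr (fun i P => le i j /\ P) True s)].

Definition mono_directed_diagram (I : Type) (le : I -> I -> Prop)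
    (Z : I -> topologicalType) (z : forall i j, le i j -> Z i -> Z j) : Prop :=
  directed_poset le /\
  [/\ (forall i, kolmogorov_space (Z i)),
      (forall i j (p : le i j), continuous (z i j p)),
      (forall i (p : le i i) x, z i i p x = x),
      (forall i j k (p : le i j) (q : le j k) (r : le i k) x,
          z j k q (z i j p x) = z i k r x) &
      (forall i j (p : le i j), Top0_mono (z i j p))].

Definition Top0_cocone (I : Type) (le : I -> I -> Prop)
    (Z : I -> topologicalType) (z : forall i j, le i j -> Z i -> Z j)
    (W : topologicalType) (c : forall i, Z i -> W) : Prop :=
  kolmogorov_space W /\
  (forall i, continuous (c i)) /\
  (forall i j (p : le i j), c j \o z i j p = c i).

Definition Top0_colimit (I : Type) (le : I -> I -> Prop)
    (Z : I -> topologicalType) (z : forall i j, le i j -> Z i -> Z j)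
    (W : topologicalType) (c : forall i, Z i -> W) : Prop :=
  Top0_cocone z c /\
  forall (V : topologicalType) (d : forall i, Z i -> V), Top0_cocone z d ->
    (exists u : W -> V, continuous u /\ forall i, u \o c i = d i) /\
    (forall u u' : W -> V, continuous u -> continuous u' ->
       (forall i, u \o c i = d i) -> (forall i, u' \o c i = d i) -> u = u').

Definition Top0_finitely_generated (X : topologicalType) : Prop :=
  forall (I : Type) (le : I -> I -> Prop)
         (Z : I -> topologicalType) (z : forall i j, le i j -> Z i -> Z j)
         (W : topologicalType) (c : forall i, Z i -> W),
    mono_directed_diagram z -> Top0_colimit z c ->
    forall f : X -> W, continuous f ->
      (exists i (g : X -> Z i), continuous g /\ f = c i \o g) /\
      (forall i (g g' : X -> Z i), continuous g -> continuous g' ->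
         f = c i \o g -> f = c i \o g' ->
         exists j (p : le i j), z i j p \o g = z i j p \o g').

(* Main.v *)
Require Import Defs.
From HB Require Import structures.
From mathcomp Require Import all_boot all_order.
From mathcomp Require Import boolp classical_sets topology separation_axioms.
Local Open Scope classical_set_scope.
Definition opn (n : nat) (U : set nat) : Prop :=
  U = set0 \/ ((exists k, forall m, (k <= m)%N -> U m) /\ forall x, (x < n)%N -> U x.+1 -> U x).
Definition Zt (n : nat) : Type := nat.
HB.instance Definition _ n := Choice.on (Zt n).
Lemma opT n : opn n setT. Proof. right; split; [exists 0|]; by []. Qed.
Lemma opI n : setI_closed (opn n).
Proof.
move=> A B [->|[[k Hk] HA]]; first by left; rewrite set0I.
move=> [->|[[l Hl] HB]]; first by left; rewrite setI0.
right; split; first exists (maxn k l).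
  move=> m; rewrite geq_max => /andP[h1 h2]; split; [exact: Hk|exact: Hl].
by move=> x xn [h1 h2]; split; [exact: HA|exact: HB].
Qed.
Lemma opU n (I : Type) (f : I -> set nat) : (forall i, opn n (f i)) -> opn n (\bigcup_(i in setT) f i).
Proof.
move=> H; have [[i [y fiy]]|nex] := pselect (exists i, exists y, f i y).
  right; split.
    case: (H i) => [fi0|[[k Hk] _]]; first by rewrite fi0 in fiy.
    by exists k => m km; exists i => //; apply: Hk.
  move=> x xn [j _ fj]; exists j => //.
  case: (H j) => [fj0|[_ Hd]]; first by rewrite fj0 in fj.
  exact: Hd.
left; apply/seteqP; split => // x [j _ fj]; apply: nex; by exists j, x.
Qed.
HB.instance Definition _ n := isOpenTopological.Build (Zt n) (@opT n) (@opI n) (@opU n).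
Lemma openZ n (A : set (Zt n)) : open A -> opn n A.
Proof. by []. Qed.

Definition U1 : Type := unit.
HB.instance Definition _ := Choice.on U1.
Lemma uT : (fun _ : set U1 => True) setT. Proof. by []. Qed.
Lemma uI : setI_closed (fun _ : set U1 => True). Proof. by []. Qed.
Lemma uU (I : Type) (f : I -> set U1) : (forall i : I, True) -> True. Proof. by []. Qed.
HB.instance Definition _ := isOpenTopological.Build U1 uT uI uU.
Lemma U1_T0 : kolmogorov_space U1.
Proof. by move=> [] [] /eqP. Qed.

Lemma opn_mono i j (A : set nat) : (i <= j)%N -> opn j A -> opn i A.
Proof.
move=> ij [->|[tl H]]; first by left.
right; split=> // x xi; apply: H; exact: leq_trans xi ij.
Qed.

Lemma Zt_T0 n : kolmogorov_space (Zt n).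
Proof.
have key : forall a b : Zt n, (a < b)%N ->
    exists A : set (Zt n), A \in nbhs a /\ b \in ~` A.
  move=> a b ab.
  pose A : set (Zt n) := [set m | (m < b)%N \/ (maxn n b < m)%N].
  have oA : open A.
    right; split.
      by exists (maxn n b).+1 => m hm; right.
    move=> z zn [h|h]; first by left; exact: ltnW.
    by exfalso; move: h; rewrite ltnS geq_max => /andP[h _]; move: h; rewrite leqNgt zn.
  exists A; split.
    apply: mem_set; apply: open_nbhs_nbhs; split=> //; by left.
  apply: mem_set => -[|]; first by rewrite ltnn.
  by rewrite ltnNge leq_maxr.
move=> x y; rewrite neq_ltn => /orP[h|h].
  by have [A [h1 h2]] := key _ _ h; exists A; left.
by have [A [h1 h2]] := key _ _ h; exists A; right.
Qed.

Definition leN (i j : nat) : Prop := (i <= j)%N.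
Definition zN (i j : nat) (p : leN i j) : Zt i -> Zt j := fun x => x.

Lemma zN_cont i j (p : leN i j) : continuous (zN i j p).
Proof.
apply/continuousP => A oA; exact: (opn_mono _ _ _ p oA).
Qed.

Lemma diagN : mono_directed_diagram zN.
Proof.
split.
  split.
  - by move=> i; exact: leqnn.
  - by move=> i j k; exact: leq_trans.
  - by move=> i j h1 h2; apply/eqP; rewrite eqn_leq; apply/andP.
  - move=> s; exists (foldr maxn 0 s).
    suff H : forall b, (foldr maxn 0 s <= b)%N -> foldr (fun i P => leN i b /\ P) True s.
      exact: H.
    move=> b; elim: s => //= a s IH.
    by rewrite geq_max => /andP[h1 h2]; split; [exact: h1|exact: IH].
split.
- exact: Zt_T0.
- exact: zN_cont.
- by [].
- by [].
- by move=> i j p W _ g h _ _ E.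
Qed.

Definition cN (i : nat) : Zt i -> U1 := fun _ => tt.

Lemma down (P : set nat) : (forall z, P z.+1 -> P z) ->
  forall y k, P (y + k) -> P y.
Proof.
move=> H y; elim=> [|k IH]; first by rewrite addn0.
by rewrite addnS => /H; exact: IH.
Qed.

Lemma colimN : Top0_colimit zN cN.
Proof.
split.
  split; first exact: U1_T0.
  by split=> [i|//]; exact: cst_continuous.
move=> V d [VT0 [dc dcomp]].
have e : forall n (x : nat), d n x = d 0 x.
  by move=> n x; have := f_equal (fun h => h x) (dcomp 0 n (leq0n n)).
have sep : forall (x y : nat) (B : set V), open B -> B (d 0 x) -> ~ B (d 0 y) -> False.
  move=> x y B oB Bx By.
  pose P : set nat := d 0 @^-1` B.
  have oP : forall n, opn n P.
    move=> n; have := (proj1 (continuousP (d n)) (dc n)) B oB.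
    have -> : d n @^-1` B = P.
      by apply/seteqP; split => t /=; rewrite /P /= e.
    by [].
  have [[k Hk] _] : (exists k, forall m, (k <= m)%N -> P m) /\ True.
    case: (oP 0) => [P0|[h _]]; last by split.
    by have : P x by []; rewrite P0.
  have dn : forall z, P z.+1 -> P z.
    move=> z; case: (oP z.+1) => [P0|[_ h]]; first by rewrite P0.
    exact: h.
  apply: By; apply: (@down P dn y (maxn k y - y)).
  by rewrite subnKC ?leq_maxr //; apply: Hk; exact: leq_maxl.
have cst : forall x y : nat, d 0 x = d 0 y.
  move=> x y; apply/eqP; apply/negP => /negP hne.
  have [A [[hA hB]|[hA hB]]] := VT0 _ _ hne.
    move: (set_mem hA); rewrite nbhsE => -[B [oB Bx] BA].
    apply: (sep x y B oB Bx) => By; exact: (set_mem hB) (BA _ By).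
  move: (set_mem hA); rewrite nbhsE => -[B [oB By] BA].
  apply: (sep y x B oB By) => Bx; exact: (set_mem hB) (BA _ Bx).
split.
  exists (fun _ => d 0 0); split; first exact: cst_continuous.
  by move=> i; apply: funext => x /=; rewrite e (cst x 0).
move=> u u' _ _ hu hu'; apply: funext => -[].
have := f_equal (fun h => h 0) (hu 0); have := f_equal (fun h => h 0) (hu' 0).
by move=> /= -> ->.
Qed.

Theorem corollary5p5 (X : topologicalType) (hX : kolmogorov_space X) :
  Top0_finitely_generated X <-> [set: X] = set0.
Proof.
split.
  move=> fg; apply/seteqP; split => // x0 _.
  have fc : continuous (cN 0 \o (fun _ : X => 0 : Zt 0)) by exact: cst_continuous.
  have [_ H] := fg _ _ _ _ _ _ diagN colimN _ fc.
  have [j [p E]] := H 0 (fun _ => 0 : Zt 0) (fun _ => 1 : Zt 0)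
    (@cst_continuous X (Zt 0) 0) (@cst_continuous X (Zt 0) 1) erefl erefl.
  by have := f_equal (fun h => h x0) E.
move=> X0 I le Z z W c [[refl _ _ ub] _] _ f _.
have nX : forall x : X, False by move=> x; have : [set: X] x by []; rewrite X0.
have [i _] := ub [::].
split.
  exists i, (fun x => match nX x with end); split.
    by move=> x; case: (nX x).
  by apply: funext => x; case: (nX x).
move=> i0 g g' _ _ _ _; exists i0, (refl i0).
by apply: funext => x; case: (nX x).
Qed.
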